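(* Let $n\ge 2$ and let $A$ be an associative (not necessarily unital) algebra over a field satisfying the identity $x_1x_2\cdots x_n=x_2x_3\cdots x_nx_1$ (i.e. the identity associated with the cycle $(1\,2\,\cdots\,n)\in S_n$). Then $A$ is eventually commutative of degree $n+1$.
   Context: An algebra $A$ satisfies an identity $x_1\cdots x_m=x_{\tau(1)}\cdots x_{\tau(m)}$ (with $\tau\in S_m$) if $a_1\cdots a_m=a_{\tau(1)}\cdots a_{\tau(m)}$ for all $a_1,\dots,a_m\in A$. $A$ is eventually commutative of degree $k$ if it satisfies $x_1\cdots x_k=x_{\tau(1)}\cdots x_{\tau(k)}$ for every $\tau\in S_k$. *)

(* Defs.v *)
From mathcomp Require Import all_boot all_order all_algebra all_fingroup.
Set Implicit Arguments. Unset Strict Implicit. Unset Printing Implicit Defensive.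
Import GRing.Theory.
Local Open Scope ring_scope.

Definition assoc_algebra (K : fieldType) (A : lmodType K) (mul : A -> A -> A) : Prop :=
  [/\ associative mul,
      (forall (k : K) (x y z : A), mul (k *: x + y) z = k *: mul x z + mul y z)
    & (forall (k : K) (x y z : A), mul x (k *: y + z) = k *: mul x y + mul x z)].

(* The empty product is set to 0 by convention;
   it is never used below since all words have length >= 2. *)
Fixpoint nprod (A : Type) (zero : A) (mul : A -> A -> A) (s : seq A) : A :=
  match s with
  | [::] => zero
  | [:: x] => x
  | x :: s' => mul x (nprod zero mul s')
  end.

(* A satisfies x_1 ... x_m = x_{tau 1} ... x_{tau m}  (indices 0-based). *)
Definition satisfies_identity (K : fieldType) (A : lmodType K) (mul : A -> A -> A)
  (m : nat) (tau : 'S_m) : Prop :=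
  forall a : 'I_m -> A,
    nprod 0 mul [seq a i | i <- enum 'I_m] = nprod 0 mul [seq a (tau i) | i <- enum 'I_m].

Definition eventually_commutative (K : fieldType) (A : lmodType K) (mul : A -> A -> A)
  (k : nat) : Prop :=
  forall tau : 'S_k, satisfies_identity mul tau.

(* The cycle (1 2 ... n) in S_n, i.e. i |-> i+1 mod n (0-based). *)
Definition cycle_perm (n : nat) : 'S_n := perm (@ordS_inj n).

(* Main.v *)
Require Import Defs.
From mathcomp Require Import all_boot all_order all_algebra all_fingroup.
From mathcomp Require Import zify.
Set Implicit Arguments. Unset Strict Implicit. Unset Printing Implicit Defensive.
Import GRing.Theory.

Section Gen.
Variables (T B : Type).

Definition swap_inv (f : seq T -> B) :=
  forall pre x y post, f (pre ++ x :: y :: post) = f (pre ++ y :: x :: post).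

Lemma move_front (t1 : seq T) : forall (f : seq T -> B) x t2, swap_inv f ->
  f (t1 ++ x :: t2) = f (x :: t1 ++ t2).
Proof.
elim: t1 => [|a t1 IH] f x t2 Hf //=.
have Hg : swap_inv (fun u => f (a :: u)).
  by move=> pre y z post; exact: (Hf (a :: pre)).
rewrite (IH (fun u => f (a :: u)) x t2 Hg).
exact: (Hf [::] a x (t1 ++ t2)).
Qed.
End Gen.

Lemma perm_inv (T : eqType) B (s : seq T) : forall (f : seq T -> B) t,
  swap_inv f -> perm_eq s t -> f s = f t.
Proof.
elim: s => [|x s IH] f t Hf Hp.
  by move: Hp; rewrite perm_sym => /perm_nilP ->.
have xt : x \in t by rewrite -(perm_mem Hp) mem_head.
case/splitPr: xt Hp => t1 t2 Hp.
rewrite (move_front _ _ _ Hf).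
have Hg : swap_inv (fun u => f (x :: u)).
  by move=> pre y z post; exact: (Hf (x :: pre)).
apply: (IH (fun u => f (x :: u))) => //.
rewrite -(perm_cons x); apply: (perm_trans Hp).
by rewrite -cat1s perm_catCA.
Qed.

Section Alg.
Variables (K : fieldType) (A : lmodType K) (mul : A -> A -> A).
Hypothesis massoc : associative mul.
Local Notation P := (nprod (0:A)%R mul).
Implicit Types (s w t : seq A) (a b c : A).

Lemma P_cons c w : w != [::] -> P (c :: w) = mul c (P w).
Proof. by case: w. Qed.

Lemma P_rcons s a : s != [::] -> P (rcons s a) = mul (P s) a.
Proof.
elim: s => [|c s IH] // _.
case: s IH => [|d s] IH //.
rewrite rcons_cons (P_cons c) // IH // -massoc -P_cons //.
Qed.

Lemma P_merge s a b t : P (s ++ mul a b :: t) = P (s ++ a :: b :: t).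
Proof.
elim: s => [|c s IH].
  by case: t => [|d t] //=; rewrite massoc.
rewrite cat_cons P_cons; last by case: s {IH}.
rewrite cat_cons (P_cons c); last by case: s {IH}.
by rewrite IH.
Qed.

Variable n : nat.
Hypothesis n2 : (2 <= n)%N.
Hypothesis cyc : forall u, size u = n -> P u = P (rot 1 u).

Lemma rot_n1 x w : size w = n -> P (x :: w) = P (rcons w x).
Proof.
move=> sw; case/lastP: w sw => [|w b] sw; first by move: n2; rewrite -sw.
case/lastP: w sw => [|w a] sw; first by move: n2; rewrite -sw.
have E1 : rcons (rcons w a) b = w ++ [:: a; b] by rewrite -!cats1 -catA.
have E2 : rcons (rcons (rcons w a) b) x = w ++ [:: a, b & [:: x]]
  by rewrite E1 -cats1 -catA.
rewrite E2 E1 -cat_cons -P_merge cyc; last by rewrite size_cat /= -sw !size_rcons addn1.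
by rewrite rot1_cons -cats1 -catA /= P_merge.
Qed.

Lemma rot_gen pre : forall t, (size pre + size t = n.+1)%N -> P (pre ++ t) = P (t ++ pre).
Proof.
elim: pre => [|x pre IH] t st; first by rewrite cats0.
rewrite cat_cons rot_n1; last by move: st; rewrite size_cat /= addSn => -[].
rewrite rcons_cat IH ?cat_rcons //.
by move: st; rewrite size_rcons addnS addSn.
Qed.

Lemma swap_last pre a b : size pre = n.-1 -> P (pre ++ [:: a; b]) = P (pre ++ [:: b; a]).
Proof.
move=> sp.
have -> : pre ++ [:: a; b] = (pre ++ [:: a]) ++ [:: b] by rewrite -catA.
rewrite rot_gen; last by rewrite size_cat sp /=; move: n2; lia.
rewrite cat1s -cat_cons cats1 P_rcons // (cyc (u:=b :: pre)); last by rewrite /= sp; move: n2; lia.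
by rewrite rot1_cons -P_rcons; [rewrite -!cats1 -catA | case: pre {sp}].
Qed.

Lemma swap_any pre x y post : size (pre ++ x :: y :: post) = n.+1 ->
  P (pre ++ x :: y :: post) = P (pre ++ y :: x :: post).
Proof.
move=> sz.
have E : forall u v, pre ++ u :: v :: post = (pre ++ [:: u; v]) ++ post by move=> u v; rewrite -catA.
rewrite !E rot_gen; last by move: sz; rewrite !size_cat /=; lia.
rewrite [RHS]rot_gen; last by move: sz; rewrite !size_cat /=; lia.
rewrite !catA swap_last //.
by move: sz; rewrite !size_cat /=; lia.
Qed.
End Alg.

Lemma enum_nth (T : Type) (x0 : T) n (u : seq T) : size u = n ->
  [seq nth x0 u (val i) | i <- enum 'I_n] = u.
Proof.
move=> su; rewrite (map_comp (nth x0 u) val) val_enum_ord -su; exact: mkseq_nth.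
Qed.

Lemma enum_nth_rot (T : Type) (x0 : T) n (u : seq T) : size u = n ->
  [seq nth x0 u (val (cycle_perm n i)) | i <- enum 'I_n] = rot 1 u.
Proof.
move=> su.
have -> : [seq nth x0 u (val (cycle_perm n i)) | i <- enum 'I_n] =
   [seq nth x0 u (j.+1 %% n) | j <- iota 0 n].
  rewrite -val_enum_ord -map_comp; apply: eq_map => i /=.
  by rewrite /cycle_perm permE.
case: u su => [|x w] su; first by rewrite -su.
rewrite rot1_cons; apply: (@eq_from_nth _ x0).
  by rewrite size_map size_iota size_rcons.
move=> i; rewrite size_map size_iota => lti.
rewrite (nth_map 0%N) ?size_iota // nth_iota // add0n nth_rcons.
have sw : size w = n.-1 by rewrite -su.
case: ltngtP => H.
- by rewrite modn_small //; move: lti; lia.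
- by move: H lti; lia.
- have -> : i.+1 = n by move: H lti; lia.
  by rewrite modnn.
Qed.

Theorem theorem3p6 (K : fieldType) (A : lmodType K) (mul : A -> A -> A) (n : nat) :
  (2 <= n)%N ->
  assoc_algebra mul ->
  satisfies_identity mul (cycle_perm n) ->
  eventually_commutative mul n.+1.
Proof.
move=> n2 [massoc _ _] Hid tau a.
have cyc : forall u : seq A, size u = n -> nprod 0%R mul u = nprod 0%R mul (rot 1 u).
  move=> u su; have := Hid (fun i => nth 0%R u (val i)).
  by rewrite enum_nth // enum_nth_rot.
pose f (s : seq A) := if size s == n.+1 then nprod 0%R mul s else 0%R.
have Hf : swap_inv f.
  move=> pre x y post; rewrite /f.
  have -> : size (pre ++ [:: y, x & post]) = size (pre ++ [:: x, y & post]).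
    by rewrite !size_cat.
  case: eqP => // E; exact: (swap_any massoc n2 cyc).
have := perm_inv (s := [seq a i | i <- enum 'I_n.+1])
   (t := [seq a (tau i) | i <- enum 'I_n.+1]) Hf.
have Hs : forall g : 'I_n.+1 -> A, size [seq g i | i <- enum 'I_n.+1] = n.+1.
  by move=> g; rewrite size_map size_enum_ord.
rewrite /f !Hs eqxx; apply.
rewrite (map_comp a tau); apply: perm_map.
apply: uniq_perm; first exact: enum_uniq.
  by rewrite map_inj_uniq ?enum_uniq //; exact: perm_inj.
move=> i; rewrite mem_enum; symmetry; apply/mapP; exists (tau^-1 i)%g.
  by rewrite mem_enum.
by rewrite permKV.
Qed.
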